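(* Consider the vector nonlinear Riemann–Hilbert problem on the real line $$\phi_i^+(\lambda)=\mathcal R_i(\phi_1^-(\lambda),\phi_2^-(\lambda),\lambda),\quad i=1,2,\ \lambda\in\mathbb R,$$ where $\mathcal R_i(\zeta_1,\zeta_2,\lambda)=\zeta_i+R_i(\zeta_1,\zeta_2,\lambda)$ for given spectral data $R_1,R_2$ (defined for $(\zeta_1,\zeta_2)\in\mathbb C^2$, $\lambda\in\mathbb R$, independent of $x,y,z,t$), and where $\phi_i^{+}$ (resp. $\phi_i^-$) are analytic in $\lambda$ in the upper (resp. lower) half-plane and depend on parameters $(x,y,z,t)$, with normalization $$\phi_1^{\pm}(\lambda)=-y+O(\lambda^{-1}),\qquad \phi_2^{\pm}(\lambda)=x+\lambda t+O(\lambda^{-1}),\qquad |\lambda|\gg1.$$ Assume this Riemann–Hilbert problem and its linearization $\vec\sigma^+=\mathcal J\vec\sigma^-$ (where $\mathcal J$ is the Jacobian matrix $\mathcal J_{ij}=\partial\mathcal R_i/\partial\zeta_j$ evaluated at $\vec\phi^-$) are uniquely solvable. Define $u$ by $$u_x=\lim_{\lambda\to\infty}\lambda(\phi_1^{\pm}+y),\qquad u_y=\lim_{\lambda\to\infty}\lambda(\phi_2^{\pm}-x-\lambda t).$$ Then $\vec\phi^{\pm}=(\phi_1^\pm,\phi_2^\pm)$ are common eigenfunctions of the vector fields $$T=\partial_t+(u_{xy}-\lambda)\partial_x-u_{xx}\partial_y,\qquad Z=\lambda\partial_z-u_{yz}\partial_x+u_{zx}\partial_y,$$ i.e. $T\phi_i^\pm=Z\phi_i^\pm=0$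 for $i=1,2$.
   Context: The vector fields $T,Z$ form the Lax pair of the Doubrov–Ferapontov modified heavenly equation $u_{zt}+u_{zx}u_{xy}-u_{yz}u_{xx}=0$. Subscripts denote partial derivatives. *)

(* Defs.v *)
From Stdlib Require Import Reals.
From Coquelicot Require Export Coquelicot.

Open Scope R_scope.

Inductive sgn := Plus | Minus.
Inductive idx := I1 | I2.
Inductive dir := Dx | Dy | Dz | Dt.

Definition half (s : sgn) (l : C) : Prop :=
  match s with Plus => 0 <= Im l | Minus => Im l <= 0 end.
Definition ohalf (s : sgn) (l : C) : Prop :=
  match s with Plus => 0 < Im l | Minus => Im l < 0 end.

(** Analytic (complex-differentiable) in the open half-plane, continuous up to
    the real axis (so that the boundary values on R are the restriction). *)
Definition RH_analytic (s : sgn) (f : C -> C) : Prop :=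
  (forall l, ohalf s l -> @ex_derive C_AbsRing C_NormedModule f l) /\
  (forall l, half s l -> filterlim f (within (half s) (locally l)) (locally (f l))).

Definition lim_inf_in (S : C -> Prop) (f : C -> C) (L : C) : Prop :=
  forall eps, 0 < eps -> exists K, forall l, S l -> K <= Cmod l -> Cmod (f l - L) < eps.

Definition bigO_inv (S : C -> Prop) (f : C -> C) : Prop :=
  exists M K, forall l, S l -> K <= Cmod l -> Cmod l * Cmod (f l) <= M.

Definition cdiff2 (F : C -> C -> C) (z1 z2 A B : C) : Prop :=
  forall eps, 0 < eps -> exists delta, 0 < delta /\
    forall h1 h2, Cmod h1 < delta -> Cmod h2 < delta ->
      Cmod (F (z1 + h1)%C (z2 + h2)%C - F z1 z2 - A * h1 - B * h2)%C
        <= eps * (Cmod h1 + Cmod h2).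

Definition F4 := R -> R -> R -> R -> C.

Definition slice (a : dir) (F : F4) (x y z t : R) : R -> C :=
  match a with
  | Dx => fun s => F s y z t
  | Dy => fun s => F x s z t
  | Dz => fun s => F x y s t
  | Dt => fun s => F x y z s
  end.
Definition coord (a : dir) (x y z t : R) : R :=
  match a with Dx => x | Dy => y | Dz => z | Dt => t end.

Definition ex_pd (a : dir) (F : F4) (x y z t : R) : Prop :=
  ex_derive (fun s => Re (slice a F x y z t s)) (coord a x y z t) /\
  ex_derive (fun s => Im (slice a F x y z t s)) (coord a x y z t).

Definition pd (a : dir) (F : F4) : F4 := fun x y z t =>
  (Derive (fun s => Re (slice a F x y z t s)) (coord a x y z t),
   Derive (fun s => Im (slice a F x y z t s)) (coord a x y z t)).

Definition lead (i : idx) (x y z t : R) (l : C) : C :=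
  match i with
  | I1 => RtoC (- y)
  | I2 => (RtoC x + l * RtoC t)%C
  end.

Definition one_if_eq (i j : idx) : C :=
  match i, j with I1, I1 | I2, I2 => 1%C | _, _ => 0%C end.

(** Vector RH problem with spectral data Rsp_i (calR_i = zeta_i + Rsp_i),
    normalization at parameters (x,y,z,t): psi s i is the function phi_i^s. *)
Definition is_RH_solution (Rsp : idx -> C -> C -> R -> C) (x y z t : R)
    (psi : sgn -> idx -> C -> C) : Prop :=
  (forall s i, RH_analytic s (psi s i)) /\
  (forall i (r : R), psi Plus i (RtoC r) =
      (psi Minus i (RtoC r) + Rsp i (psi Minus I1 (RtoC r)) (psi Minus I2 (RtoC r)) r)%C) /\
  (forall s i, bigO_inv (half s) (fun l => psi s i l - lead i x y z t l)%C).

(** Jacobian J_ij = d calR_i / d zeta_j evaluated at phi^-, given the partial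
    derivatives dR i j of Rsp_i w.r.t. zeta_j. *)
Definition Jac (dR : idx -> idx -> C -> C -> R -> C) (phim : idx -> C -> C)
    (i j : idx) (r : R) : C :=
  (one_if_eq i j + dR i j (phim I1 (RtoC r)) (phim I2 (RtoC r)) r)%C.

(** Unique solvability of the linearized problem sigma^+ = J sigma^-:
    its only solution vanishing at infinity is the trivial one. *)
Definition lin_unique (dR : idx -> idx -> C -> C -> R -> C) (phim : idx -> C -> C) : Prop :=
  forall sigma : sgn -> idx -> C -> C,
    (forall s i, RH_analytic s (sigma s i)) ->
    (forall i (r : R), sigma Plus i (RtoC r) =
        (Jac dR phim i I1 r * sigma Minus I1 (RtoC r)
         + Jac dR phim i I2 r * sigma Minus I2 (RtoC r))%C) ->
    (forall s i, lim_inf_in (half s) (sigma s i) 0%C) ->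
    forall s i l, half s l -> sigma s i l = 0%C.

(** The vector fields T and Z applied to F (at fixed spectral parameter l).
    u_xy := d_x d_y u, u_xx := d_x d_x u, u_yz := d_z d_y u, u_zx := d_z d_x u. *)
Definition Tvf (u : F4) (F : F4) (l : C) : F4 := fun x y z t =>
  (pd Dt F x y z t + (pd Dx (pd Dy u) x y z t - l) * pd Dx F x y z t
   - pd Dx (pd Dx u) x y z t * pd Dy F x y z t)%C.

Definition Zvf (u : F4) (F : F4) (l : C) : F4 := fun x y z t =>
  (l * pd Dz F x y z t - pd Dz (pd Dy u) x y z t * pd Dx F x y z t
   + pd Dz (pd Dx u) x y z t * pd Dy F x y z t)%C.

Definition ulead (u : F4) (i : idx) : F4 :=
  match i with I1 => pd Dx u | I2 => pd Dy u end.

Definition wres (phi : sgn -> idx -> R -> R -> R -> R -> C -> C)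
    (s : sgn) (i : idx) (l : C) : F4 :=
  fun x y z t => (phi s i x y z t l - lead i x y z t l)%C.

(* Main.v *)
Require Import Defs.
From Stdlib Require Import Reals.
From Coquelicot Require Import Coquelicot.
From Stdlib Require Import Lra.
Import Defs.

Lemma tr f x l : @is_derive C_AbsRing C_NormedModule f x l -> @is_derive C_AbsRing (AbsRing_NormedModule C_AbsRing) f x l.
Proof. intros H. unfold is_derive, filterdiff in *. destruct H as [H1 H2]. split.
 - destruct H1 as [a b c]. split. exact a. exact b. destruct c as [M HM]. exists M. exact HM.
 - intros y Hy. specialize (H2 y Hy). unfold is_domin in *. intros eps. specialize (H2 eps). exact H2.
Qed.
Lemma tr' f x l : @is_derive C_AbsRing (AbsRing_NormedModule C_AbsRing) f x l -> @is_derive C_AbsRing C_NormedModule f x l.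
Proof. intros H. unfold is_derive, filterdiff in *. destruct H as [H1 H2]. split.
 - destruct H1 as [a b c]. split. exact a. exact b. destruct c as [M HM]. exists M. exact HM.
 - intros y Hy. specialize (H2 y Hy). unfold is_domin in *. intros eps. specialize (H2 eps). exact H2.
Qed.

Lemma locCA (x : C) : filter_le (@locally C_UniformSpace x) (@locally (AbsRing_UniformSpace C_AbsRing) x).
Proof. intros P HP. apply (locally_le_locally_norm (V:=C_NormedModule)).
 apply (locally_norm_le_locally (V:=AbsRing_NormedModule C_AbsRing)) in HP. destruct HP as [e He]. exists e. intros y Hy. apply He. exact Hy. Qed.
Lemma locAC (x : C) : filter_le (@locally (AbsRing_UniformSpace C_AbsRing) x) (@locally C_UniformSpace x).
Proof. intros P HP. apply (locally_le_locally_norm (V:=AbsRing_NormedModule C_AbsRing)).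
 apply (locally_norm_le_locally (V:=C_NormedModule)) in HP. destruct HP as [e He]. exists e. intros y Hy. apply He. exact Hy. Qed.
Lemma contmult (x y : C) : filterlim (fun z : C * C => (fst z * snd z)%C)
      (filter_prod (@locally C_UniformSpace x) (@locally C_UniformSpace y)) (@locally C_UniformSpace (x * y)%C).
Proof.
  eapply filterlim_filter_le_2. apply locAC.
  eapply filterlim_filter_le_1. 2: apply (@filterlim_mult C_AbsRing x y).
  intros P [Q R HQ HR HP]. exists Q R. apply locCA, HQ. apply locCA, HR. exact HP.
Qed.

Lemma ra_bin s (f g : C -> C) (op : C -> C -> C) :
  (forall x dx dy, @is_derive C_AbsRing C_NormedModule f x dx ->
      @is_derive C_AbsRing C_NormedModule g x dy ->
      exists d, @is_derive C_AbsRing C_NormedModule (fun t => op (f t) (g t)) x d) ->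
  (forall x y, filterlim (fun z : C * C => op (fst z) (snd z))
      (filter_prod (locally x) (locally y)) (locally (op x y))) ->
  RH_analytic s f -> RH_analytic s g -> RH_analytic s (fun l => op (f l) (g l)).
Proof.
  intros Hd Hc [Hf1 Hf2] [Hg1 Hg2]; split.
  - intros l Hl. destruct (Hf1 l Hl) as [df Hdf]. destruct (Hg1 l Hl) as [dg Hdg].
    destruct (Hd l df dg Hdf Hdg) as [d Hd']. exists d; exact Hd'.
  - intros l Hl. apply (filterlim_comp_2 (F:=within (half s) (locally l)) (G:=locally (f l)) (H:=locally (g l)) f g op).
    all: first [apply Hf2, Hl | apply Hg2, Hl | apply Hc | apply within_filter, locally_filter].
Qed.

Lemma ra_plus s f g : RH_analytic s f -> RH_analytic s g -> RH_analytic s (fun l => f l + g l)%C.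
Proof.
  apply ra_bin.
  - intros x dx dy H1 H2. eexists. apply (@is_derive_plus C_AbsRing C_NormedModule _ _ _ _ _ H1 H2).
  - intros x y. apply (@filterlim_plus C_AbsRing C_NormedModule).
Qed.

Lemma ra_minus s f g : RH_analytic s f -> RH_analytic s g -> RH_analytic s (fun l => f l - g l)%C.
Proof.
  apply ra_bin.
  - intros x dx dy H1 H2. eexists. apply (@is_derive_minus C_AbsRing C_NormedModule _ _ _ _ _ H1 H2).
  - intros x y. apply (@filterlim_comp_2 _ _ _ _ (filter_prod (locally x) (locally y)) (locally x) (locally (opp y)) _ _ fst (fun z => opp (snd z)) (fun a b => plus a b)).
    + apply filterlim_fst.
    + eapply filterlim_comp. apply filterlim_snd. apply (@filterlim_opp C_AbsRing C_NormedModule).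
    + apply (@filterlim_plus C_AbsRing C_NormedModule).
Qed.

Lemma ra_mult s f g : RH_analytic s f -> RH_analytic s g -> RH_analytic s (fun l => f l * g l)%C.
Proof.
  apply ra_bin.
  - intros x dx dy H1 H2. eexists. apply tr'. exact (@is_derive_mult C_AbsRing _ _ _ _ _ (tr _ _ _ H1) (tr _ _ _ H2) Cmult_comm).
  - intros x y. apply contmult.
Qed.

Lemma ra_const s c : RH_analytic s (fun _ => c).
Proof.
  split.
  - intros l _. exists (RtoC 0). apply (@is_derive_const C_AbsRing C_NormedModule).
  - intros l _. apply filterlim_const.
Qed.

Lemma ra_id s : RH_analytic s (fun l => l).
Proof.
  split.
  - intros l _. exists (RtoC 1). apply tr'. apply (@is_derive_id C_AbsRing).
  - intros l _. intros P HP. unfold filtermap, within. 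
    apply (filter_imp P). intros x Hx _. exact Hx. exact HP.
Qed.

Lemma Cmod_tri3 a b : Cmod (a + b) <= Cmod a + Cmod b.
Proof. apply Cmod_triangle. Qed.

Lemma lim_ext S f g L : (forall l, S l -> f l = g l) -> lim_inf_in S f L -> lim_inf_in S g L.
Proof. intros He H eps Heps. destruct (H eps Heps) as [K HK]. exists K. intros l Hl HKl.
  rewrite <- He by exact Hl. apply HK; auto. Qed.

Lemma lim_const S c : lim_inf_in S (fun _ => c) c.
Proof. intros eps Heps. exists 0. intros l _ _. replace (c - c)%C with (RtoC 0) by ring.
  rewrite Cmod_0. exact Heps. Qed.

Lemma lim_plus S f g L1 L2 : lim_inf_in S f L1 -> lim_inf_in S g L2 ->
  lim_inf_in S (fun l => f l + g l)%C (L1 + L2)%C.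
Proof. intros H1 H2 eps Heps.
  destruct (H1 (eps/2)) as [K1 HK1]. lra. destruct (H2 (eps/2)) as [K2 HK2]. lra.
  exists (Rmax K1 K2). intros l Hl HK.
  replace (f l + g l - (L1 + L2))%C with ((f l - L1) + (g l - L2))%C by ring.
  eapply Rle_lt_trans. apply Cmod_triangle.
  assert (Cmod (f l - L1) < eps/2) by (apply HK1; auto; eapply Rle_trans; [apply Rmax_l|exact HK]).
  assert (Cmod (g l - L2) < eps/2) by (apply HK2; auto; eapply Rle_trans; [apply Rmax_r|exact HK]).
  lra. Qed.

Lemma lim_scal S c f L : lim_inf_in S f L -> lim_inf_in S (fun l => c * f l)%C (c * L)%C.
Proof. intros H eps Heps.
  assert (Hc : 0 <= Cmod c) by apply Cmod_ge_0.
  destruct (H (eps / (Cmod c + 1))) as [K HK]. apply Rdiv_lt_0_compat; lra.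
  exists K. intros l Hl HKl.
  replace (c * f l - c * L)%C with (c * (f l - L))%C by ring. rewrite Cmod_mult.
  specialize (HK l Hl HKl).
  assert (Cmod c * Cmod (f l - L) <= Cmod c * (eps / (Cmod c + 1))) by (apply Rmult_le_compat_l; lra).
  assert (Cmod c * (eps / (Cmod c + 1)) < eps).
  { apply Rmult_lt_reg_r with (Cmod c + 1). lra. field_simplify; lra. }
  lra. Qed.

Lemma lim_opp S f L : lim_inf_in S f L -> lim_inf_in S (fun l => - f l)%C (- L)%C.
Proof. intros H. apply lim_ext with (fun l => (-1) * f l)%C. intros; ring.
  replace (-L)%C with ((-1)*L)%C by ring. apply lim_scal, H. Qed.

Lemma lim_minus S f g L1 L2 : lim_inf_in S f L1 -> lim_inf_in S g L2 ->
  lim_inf_in S (fun l => f l - g l)%C (L1 - L2)%C.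
Proof. intros H1 H2. apply lim_plus. exact H1. apply lim_opp, H2. Qed.

Lemma lim_div0 S f L : lim_inf_in S (fun l => l * f l)%C L -> lim_inf_in S f 0%C.
Proof. intros H eps Heps.
  destruct (H 1) as [K1 HK1]. lra.
  assert (HL : 0 <= Cmod L) by apply Cmod_ge_0.
  exists (Rmax K1 ((Cmod L + 1)/eps + 1)). intros l Hl HK.
  assert (Ha : K1 <= Cmod l) by (eapply Rle_trans; [apply Rmax_l|exact HK]).
  assert (Hb : (Cmod L + 1)/eps + 1 <= Cmod l) by (eapply Rle_trans; [apply Rmax_r|exact HK]).
  specialize (HK1 l Hl Ha).
  assert (Hc : Cmod (l * f l) <= Cmod (l * f l - L) + Cmod L).
  { replace (l * f l)%C with ((l * f l - L) + L)%C at 1 by ring. apply Cmod_triangle. }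
  rewrite Cmod_mult in Hc.
  replace (f l - 0)%C with (f l) by ring.
  assert (Hd : 0 <= Cmod (f l)) by apply Cmod_ge_0.
  assert (He : (Cmod L + 1)/eps * eps = Cmod L + 1) by (field; lra).
  assert (0 <= (Cmod L + 1)/eps) by (apply Rdiv_le_0_compat; lra).
  destruct (Rlt_or_le (Cmod (f l)) eps) as [Hf|Hf]. exact Hf.
  exfalso. assert (Cmod l * eps <= Cmod l * Cmod (f l)) by (apply Rmult_le_compat_l; [apply Cmod_ge_0|lra]).
  nra. Qed.

Lemma lim_eqL' S f L L' : lim_inf_in S f L -> L = L' -> lim_inf_in S f L'.
Proof. intros H ->. exact H. Qed.

Lemma Cmod_le_sum z : Cmod z <= Rabs (Re z) + Rabs (Im z).
Proof. pose proof (Cmod2_alt z). pose proof (Cmod_ge_0 z).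
  rewrite <- (pow2_abs (Re z)), <- (pow2_abs (Im z)) in H.
  pose proof (Rabs_pos (Re z)). pose proof (Rabs_pos (Im z)). nra. Qed.
Lemma Re_le_Cmod z : Rabs (Re z) <= Cmod z.
Proof. pose proof (Cmod2_alt z). pose proof (Cmod_ge_0 z).
  rewrite <- (pow2_abs (Re z)), <- (pow2_abs (Im z)) in H.
  pose proof (Rabs_pos (Re z)). pose proof (Rabs_pos (Im z)). nra. Qed.
Lemma Im_le_Cmod z : Rabs (Im z) <= Cmod z.
Proof. pose proof (Cmod2_alt z). pose proof (Cmod_ge_0 z).
  rewrite <- (pow2_abs (Re z)), <- (pow2_abs (Im z)) in H.
  pose proof (Rabs_pos (Re z)). pose proof (Rabs_pos (Im z)). nra. Qed.

Definition cder (g : R -> C) (s0 : R) (d : C) : Prop :=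
  forall eps, 0 < eps -> exists delta, 0 < delta /\ forall h, Rabs h < delta ->
    Cmod (g (s0 + h)%R - g s0 - RtoC h * d)%C <= eps * Rabs h.

Lemma der_to_cder g s0 d :
  is_derive (fun s => Re (g s)) s0 (Re d) -> is_derive (fun s => Im (g s)) s0 (Im d) ->
  cder g s0 d.
Proof.
  intros H1 H2 eps Heps. apply is_derive_Reals in H1. apply is_derive_Reals in H2.
  destruct (H1 (eps/2)) as [d1 Hd1]. lra. destruct (H2 (eps/2)) as [d2 Hd2]. lra.
  exists (Rmin d1 d2). split. apply Rmin_pos; apply cond_pos.
  intros h Hh. destruct (Req_dec h 0) as [->|Hn].
  { rewrite Rplus_0_r. replace (g s0 - g s0 - RtoC 0 * d)%C with (RtoC 0) by ring.
    rewrite Cmod_0, Rabs_R0. lra. }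
  assert (Hh1 : Rabs h < d1) by (eapply Rlt_le_trans; [exact Hh|apply Rmin_l]).
  assert (Hh2 : Rabs h < d2) by (eapply Rlt_le_trans; [exact Hh|apply Rmin_r]).
  specialize (Hd1 h Hn Hh1). specialize (Hd2 h Hn Hh2).
  assert (Hp : 0 < Rabs h) by (apply Rabs_pos_lt, Hn).
  eapply Rle_trans. apply Cmod_le_sum.
  assert (E1 : Re (g (s0 + h)%R - g s0 - RtoC h * d)%C = ((Re (g (s0+h)) - Re (g s0)) / h - Re d) * h).
  { destruct (g (s0+h)), (g s0), d. simpl. field. exact Hn. }
  assert (E2 : Im (g (s0 + h)%R - g s0 - RtoC h * d)%C = ((Im (g (s0+h)) - Im (g s0)) / h - Im d) * h).
  { destruct (g (s0+h)), (g s0), d. simpl. field. exact Hn. }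
  rewrite E1, E2, !Rabs_mult.
  assert (Rabs ((Re (g (s0 + h)) - Re (g s0)) / h - Re d) * Rabs h <= eps/2 * Rabs h) by (apply Rmult_le_compat_r; lra).
  assert (Rabs ((Im (g (s0 + h)) - Im (g s0)) / h - Im d) * Rabs h <= eps/2 * Rabs h) by (apply Rmult_le_compat_r; lra).
  lra.
Qed.

Lemma cder_to_der G s0 D : cder G s0 D ->
  is_derive (fun s => Re (G s)) s0 (Re D) /\ is_derive (fun s => Im (G s)) s0 (Im D).
Proof.
  intros H. split; apply is_derive_Reals; intros eps Heps;
  destruct (H (eps/2)) as [delta [Hd HD]]; try lra;
  exists (mkposreal delta Hd); intros h Hn Hh; simpl in Hh;
  specialize (HD h Hh); assert (Hp : 0 < Rabs h) by (apply Rabs_pos_lt, Hn).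
  - assert (E1 : (Re (G (s0+h)) - Re (G s0)) / h - Re D = Re (G (s0 + h)%R - G s0 - RtoC h * D)%C / h).
    { destruct (G (s0+h)), (G s0), D. simpl. field. exact Hn. }
    rewrite E1. unfold Rdiv. rewrite Rabs_mult, Rabs_inv.
    pose proof (Re_le_Cmod (G (s0 + h)%R - G s0 - RtoC h * D)%C).
    apply Rmult_lt_reg_r with (Rabs h). exact Hp. rewrite Rmult_assoc, Rinv_l by lra. nra.
  - assert (E1 : (Im (G (s0+h)) - Im (G s0)) / h - Im D = Im (G (s0 + h)%R - G s0 - RtoC h * D)%C / h).
    { destruct (G (s0+h)), (G s0), D. simpl. field. exact Hn. }
    rewrite E1. unfold Rdiv. rewrite Rabs_mult, Rabs_inv.
    pose proof (Im_le_Cmod (G (s0 + h)%R - G s0 - RtoC h * D)%C).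
    apply Rmult_lt_reg_r with (Rabs h). exact Hp. rewrite Rmult_assoc, Rinv_l by lra. nra.
Qed.

Lemma cder_bound g s0 d : cder g s0 d -> exists delta, 0 < delta /\ forall h, Rabs h < delta ->
  Cmod (g (s0 + h)%R - g s0)%C <= (Cmod d + 1) * Rabs h.
Proof. intros H. destruct (H 1 Rlt_0_1) as [delta [Hd HD]]. exists delta. split. exact Hd.
  intros h Hh. specialize (HD h Hh).
  replace (g (s0 + h)%R - g s0)%C with ((g (s0 + h)%R - g s0 - RtoC h * d) + RtoC h * d)%C by ring.
  eapply Rle_trans. apply Cmod_triangle. rewrite Cmod_mult, Cmod_R. nra. Qed.

Lemma cder_chain (F : C -> C -> C) g1 g2 s0 d1 d2 A B :
  cdiff2 F (g1 s0) (g2 s0) A B -> cder g1 s0 d1 -> cder g2 s0 d2 ->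
  cder (fun s => F (g1 s) (g2 s)) s0 (A * d1 + B * d2)%C.
Proof.
  intros HF H1 H2 eps Heps.
  set (M1 := Cmod d1 + 1). set (M2 := Cmod d2 + 1).
  assert (HM1 : 1 <= M1) by (unfold M1; pose proof (Cmod_ge_0 d1); lra).
  assert (HM2 : 1 <= M2) by (unfold M2; pose proof (Cmod_ge_0 d2); lra).
  pose proof (Cmod_ge_0 A) as HA. pose proof (Cmod_ge_0 B) as HB.
  set (e1 := eps / (2 * (M1 + M2))). set (e2 := eps / (2 * (Cmod A + Cmod B + 1))).
  assert (He1 : 0 < e1) by (unfold e1; apply Rdiv_lt_0_compat; lra).
  assert (He2 : 0 < e2) by (unfold e2; apply Rdiv_lt_0_compat; lra).
  assert (Ee1 : e1 * (M1 + M2) = eps / 2) by (unfold e1; field; lra).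
  assert (Ee2 : (Cmod A + Cmod B) * e2 <= eps / 2).
  { unfold e2. apply Rmult_le_reg_r with (2 * (Cmod A + Cmod B + 1)). lra.
    field_simplify; try lra. }
  destruct (HF e1 He1) as [dF [HdF HDF]].
  destruct (H1 e2 He2) as [a1 [Ha1 HA1]]. destruct (H2 e2 He2) as [a2 [Ha2 HA2]].
  destruct (cder_bound _ _ _ H1) as [b1 [Hb1 HB1]]. destruct (cder_bound _ _ _ H2) as [b2 [Hb2 HB2]].
  set (c := dF / (M1 + M2)). assert (Hc : 0 < c) by (unfold c; apply Rdiv_lt_0_compat; lra).
  exists (Rmin (Rmin a1 a2) (Rmin (Rmin b1 b2) c)). split.
  { repeat apply Rmin_pos; lra. }
  intros h Hh.
  assert (h1 : Rabs h < a1) by (eapply Rlt_le_trans; [exact Hh| eapply Rle_trans; [apply Rmin_l|apply Rmin_l]]).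
  assert (h2 : Rabs h < a2) by (eapply Rlt_le_trans; [exact Hh| eapply Rle_trans; [apply Rmin_l|apply Rmin_r]]).
  assert (h3 : Rabs h < b1) by (eapply Rlt_le_trans; [exact Hh| eapply Rle_trans; [apply Rmin_r| eapply Rle_trans; [apply Rmin_l|apply Rmin_l]]]).
  assert (h4 : Rabs h < b2) by (eapply Rlt_le_trans; [exact Hh| eapply Rle_trans; [apply Rmin_r| eapply Rle_trans; [apply Rmin_l|apply Rmin_r]]]).
  assert (h5 : Rabs h < c) by (eapply Rlt_le_trans; [exact Hh| eapply Rle_trans; [apply Rmin_r|apply Rmin_r]]).
  specialize (HA1 h h1). specialize (HA2 h h2). specialize (HB1 h h3). specialize (HB2 h h4).
  set (k1 := (g1 (s0 + h)%R - g1 s0)%C) in *. set (k2 := (g2 (s0 + h)%R - g2 s0)%C) in *.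
  assert (Hhc : (M1 + M2) * Rabs h < dF).
  { unfold c in h5. apply Rmult_lt_reg_r with (/ (M1 + M2)). apply Rinv_0_lt_compat; lra.
    rewrite Rmult_comm, <- Rmult_assoc, Rinv_l by lra. lra. }
  pose proof (Rabs_pos h).
  assert (0 <= M1 * Rabs h) by (apply Rmult_le_pos; lra).
  assert (0 <= M2 * Rabs h) by (apply Rmult_le_pos; lra).
  fold M1 in HB1. fold M2 in HB2.
  assert (Hk1 : Cmod k1 < dF) by lra. assert (Hk2 : Cmod k2 < dF) by lra.
  specialize (HDF k1 k2 Hk1 Hk2).
  assert (Eg1 : g1 (s0 + h)%R = (g1 s0 + k1)%C) by (unfold k1; ring).
  assert (Eg2 : g2 (s0 + h)%R = (g2 s0 + k2)%C) by (unfold k2; ring).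
  rewrite Eg1, Eg2.
  replace (F (g1 s0 + k1)%C (g2 s0 + k2)%C - F (g1 s0) (g2 s0) - RtoC h * (A * d1 + B * d2))%C
    with ((F (g1 s0 + k1)%C (g2 s0 + k2)%C - F (g1 s0) (g2 s0) - A * k1 - B * k2)
          + (A * (k1 - RtoC h * d1) + B * (k2 - RtoC h * d2)))%C by ring.
  eapply Rle_trans. apply Cmod_triangle.
  eapply Rle_trans. apply Rplus_le_compat_l. apply Cmod_triangle.
  rewrite !Cmod_mult.
  assert (Cmod A * Cmod (k1 - RtoC h * d1) <= Cmod A * (e2 * Rabs h)) by (apply Rmult_le_compat_l; lra).
  assert (Cmod B * Cmod (k2 - RtoC h * d2) <= Cmod B * (e2 * Rabs h)) by (apply Rmult_le_compat_l; lra).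
  assert (e1 * (Cmod k1 + Cmod k2) <= e1 * ((M1 + M2) * Rabs h)) by (apply Rmult_le_compat_l; lra).
  nra.
Qed.

Lemma cder_plus f g s0 df dg : cder f s0 df -> cder g s0 dg -> cder (fun s => f s + g s)%C s0 (df + dg)%C.
Proof. intros H1 H2 eps Heps.
  destruct (H1 (eps/2)) as [a [Ha HA]]. lra. destruct (H2 (eps/2)) as [b [Hb HB]]. lra.
  exists (Rmin a b). split. apply Rmin_pos; lra. intros h Hh.
  specialize (HA h (Rlt_le_trans _ _ _ Hh (Rmin_l _ _))).
  specialize (HB h (Rlt_le_trans _ _ _ Hh (Rmin_r _ _))).
  replace (f (s0 + h)%R + g (s0 + h)%R - (f s0 + g s0) - RtoC h * (df + dg))%C with
    ((f (s0 + h)%R - f s0 - RtoC h * df) + (g (s0 + h)%R - g s0 - RtoC h * dg))%C by ring.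
  eapply Rle_trans. apply Cmod_triangle. lra. Qed.

Definition leadpd (a : dir) (i : idx) (l : C) : C :=
  match i, a with
  | I1, Dy => RtoC (-1)
  | I2, Dx => RtoC 1
  | I2, Dt => l
  | _, _ => RtoC 0
  end.

Lemma lead_ex a i x y z t l : ex_pd a (fun x y z t => lead i x y z t l) x y z t.
Proof. destruct a, i; split; simpl; auto_derive; auto. Qed.

Lemma c_eq (p q : C) : Re p = Re q -> Im p = Im q -> p = q.
Proof. destruct p, q; simpl; intros; subst; reflexivity. Qed.

Lemma lead_pd a i x y z t l : pd a (fun x y z t => lead i x y z t l) x y z t = leadpd a i l.
Proof. destruct l as [lr li].
  destruct a, i; unfold pd; apply c_eq; simpl; apply is_derive_unique; auto_derive; auto; ring. Qed.

Lemma Re_minus (p q : C) : Re (p - q)%C = Re p - Re q.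
Proof. destruct p, q; simpl; ring. Qed.
Lemma Im_minus (p q : C) : Im (p - q)%C = Im p - Im q.
Proof. destruct p, q; simpl; ring. Qed.

Lemma pd_minus a (F G : F4) x y z t : ex_pd a F x y z t -> ex_pd a G x y z t ->
  pd a (fun x y z t => F x y z t - G x y z t)%C x y z t = (pd a F x y z t - pd a G x y z t)%C.
Proof. intros [F1 F2] [G1 G2]. unfold pd. apply c_eq; rewrite ?Re_minus, ?Im_minus; simpl.
  - rewrite <- Derive_minus by assumption. apply Derive_ext. intros s'.
    destruct a; simpl; apply Re_minus.
  - rewrite <- Derive_minus by assumption. apply Derive_ext. intros s'.
    destruct a; simpl; apply Im_minus.
Qed.

Lemma pd_decomp (phi : sgn -> idx -> R -> R -> R -> R -> C -> C) s i a x y z t l :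
  ex_pd a (fun x y z t => phi s i x y z t l) x y z t ->
  pd a (fun x y z t => phi s i x y z t l) x y z t = (leadpd a i l + pd a (wres phi s i l) x y z t)%C.
Proof. intros H. unfold wres. rewrite pd_minus by (auto; apply lead_ex). rewrite lead_pd. ring. Qed.

Lemma jump_pd (Rsp : idx -> C -> C -> R -> C) (dR : idx -> idx -> C -> C -> R -> C)
  (phi : sgn -> idx -> R -> R -> R -> R -> C -> C)
  (HR : forall i (r : R) z1 z2,
      cdiff2 (fun a b => Rsp i a b r) z1 z2 (dR i I1 z1 z2 r) (dR i I2 z1 z2 r))
  (Hsol : forall x y z t, is_RH_solution Rsp x y z t (fun s i => phi s i x y z t))
  (Hpreg : forall s i a x y z t l, half s l ->
      ex_pd a (fun x y z t => phi s i x y z t l) x y z t)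
  a i x y z t (r : R) :
  pd a (fun x y z t => phi Plus i x y z t (RtoC r)) x y z t =
  (pd a (fun x y z t => phi Minus i x y z t (RtoC r)) x y z t
   + dR i I1 (phi Minus I1 x y z t (RtoC r)) (phi Minus I2 x y z t (RtoC r)) r
       * pd a (fun x y z t => phi Minus I1 x y z t (RtoC r)) x y z t
   + dR i I2 (phi Minus I1 x y z t (RtoC r)) (phi Minus I2 x y z t (RtoC r)) r
       * pd a (fun x y z t => phi Minus I2 x y z t (RtoC r)) x y z t)%C.
Proof.
  assert (Hh : half Minus (RtoC r)) by (simpl; lra).
  assert (Hc : forall j, cder (slice a (fun x y z t => phi Minus j x y z t (RtoC r)) x y z t)
      (coord a x y z t) (pd a (fun x y z t => phi Minus j x y z t (RtoC r)) x y z t)).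
  { intros j. destruct (Hpreg Minus j a x y z t (RtoC r) Hh) as [E1 E2].
    apply der_to_cder; simpl; apply Derive_correct; assumption. }
  assert (Hg : forall j, slice a (fun x y z t => phi Minus j x y z t (RtoC r)) x y z t (coord a x y z t)
     = phi Minus j x y z t (RtoC r)) by (intros; destruct a; reflexivity).
  pose proof (cder_chain (fun a b => Rsp i a b r) _ _ _ _ _ _ _ (HR i r _ _) (Hc I1) (Hc I2)) as Hch.
  rewrite !Hg in Hch.
  pose proof (cder_plus _ _ _ _ _ (Hc i) Hch) as Hs.
  apply cder_to_der in Hs. destruct Hs as [S1 S2].
  assert (Eq : forall s', slice a (fun x y z t => phi Plus i x y z t (RtoC r)) x y z t s' =
     (slice a (fun x y z t => phi Minus i x y z t (RtoC r)) x y z t s' +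
      Rsp i (slice a (fun x y z t => phi Minus I1 x y z t (RtoC r)) x y z t s')
            (slice a (fun x y z t => phi Minus I2 x y z t (RtoC r)) x y z t s') r)%C).
  { intros s'. destruct a; simpl; apply (proj1 (proj2 (Hsol _ _ _ _))). }
  assert (T1 := is_derive_ext _ (fun s => Re (slice a (fun x y z t => phi Plus i x y z t (RtoC r)) x y z t s)) _ _
    (fun s' => f_equal Re (eq_sym (Eq s'))) S1).
  assert (T2 := is_derive_ext _ (fun s => Im (slice a (fun x y z t => phi Plus i x y z t (RtoC r)) x y z t s)) _ _
    (fun s' => f_equal Im (eq_sym (Eq s'))) S2).
  rewrite <- Cplus_assoc. unfold pd at 1. apply c_eq.
  - exact (is_derive_unique _ _ _ T1).
  - exact (is_derive_unique _ _ _ T2).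
Qed.

Theorem proposition5p1
  (Rsp : idx -> C -> C -> R -> C)
  (dR : idx -> idx -> C -> C -> R -> C)
  (phi : sgn -> idx -> R -> R -> R -> R -> C -> C)
  (u : R -> R -> R -> R -> C)
  (HR : forall i (r : R) z1 z2,
      cdiff2 (fun a b => Rsp i a b r) z1 z2 (dR i I1 z1 z2 r) (dR i I2 z1 z2 r))
  (Hsol : forall x y z t, is_RH_solution Rsp x y z t (fun s i => phi s i x y z t))
  (Huniq : forall x y z t psi, is_RH_solution Rsp x y z t psi ->
      forall s i l, half s l -> psi s i l = phi s i x y z t l)
  (Hlin : forall x y z t, lin_unique dR (fun i => phi Minus i x y z t))
  (Hu : forall s i x y z t,
      lim_inf_in (half s) (fun l => l * wres phi s i l x y z t)%C (ulead u i x y z t))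
  (Hureg : forall a b x y z t, ex_pd a u x y z t /\ ex_pd a (pd b u) x y z t)
  (Hpreg : forall s i a x y z t l, half s l ->
      ex_pd a (fun x y z t => phi s i x y z t l) x y z t)
  (Hpan : forall s i a x y z t,
      RH_analytic s (fun l => pd a (fun x y z t => phi s i x y z t l) x y z t))
  (Hpas : forall s i a x y z t,
      lim_inf_in (half s) (fun l => l * pd a (wres phi s i l) x y z t)%C
        (pd a (ulead u i) x y z t)) :
  forall s i x y z t l, half s l ->
    Tvf u (fun x y z t => phi s i x y z t l) l x y z t = 0%C /\
    Zvf u (fun x y z t => phi s i x y z t l) l x y z t = 0%C.
Proof.
  intros s i x y z t l Hl. split.
  - set (sig := fun s' i' l' => Tvf u (fun x y z t => phi s' i' x y z t l') l' x y z t).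
    change (sig s i l = 0%C). apply (Hlin x y z t sig); auto.
    + intros s' i'. unfold sig, Tvf.
      apply ra_minus; [apply ra_plus; [apply Hpan | apply ra_mult; [apply ra_minus; [apply ra_const|apply ra_id] | apply Hpan]] | apply ra_mult; [apply ra_const | apply Hpan]].
    + intros i' r. unfold sig, Tvf. rewrite !(jump_pd Rsp dR phi HR Hsol Hpreg).
      unfold Jac, one_if_eq. destruct i'; ring.
    + intros s' i'. destruct i'.
      * eapply lim_ext. 2: { eapply lim_eqL'.
          { apply lim_minus. apply lim_minus. apply lim_plus.
            eapply lim_div0. apply (Hpas s' I1 Dt x y z t).
            apply (lim_scal _ (pd Dx (pd Dy u) x y z t)). eapply lim_div0. apply (Hpas s' I1 Dx x y z t).
            apply lim_minus. apply (Hpas s' I1 Dx x y z t). apply (lim_const _ (pd Dx (pd Dx u) x y z t)).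
            apply (lim_scal _ (pd Dx (pd Dx u) x y z t)). eapply lim_div0. apply (Hpas s' I1 Dy x y z t). }
          unfold ulead; ring. }
        intros l' Hl'. unfold sig, Tvf. rewrite !(pd_decomp phi s' I1) by (apply Hpreg; exact Hl').
        simpl. ring.
      * eapply lim_ext. 2: { eapply lim_eqL'.
          { apply lim_minus. apply lim_plus. apply lim_minus.
            eapply lim_div0. apply (Hpas s' I2 Dt x y z t).
            apply lim_minus. apply (Hpas s' I2 Dx x y z t). apply (lim_const _ (pd Dx (pd Dy u) x y z t)).
            apply (lim_scal _ (pd Dx (pd Dy u) x y z t)). eapply lim_div0. apply (Hpas s' I2 Dx x y z t).
            apply (lim_scal _ (pd Dx (pd Dx u) x y z t)). eapply lim_div0. apply (Hpas s' I2 Dy x y z t). }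
          unfold ulead; ring. }
        intros l' Hl'. unfold sig, Tvf. rewrite !(pd_decomp phi s' I2) by (apply Hpreg; exact Hl').
        simpl. ring.
  - set (sig := fun s' i' l' => Zvf u (fun x y z t => phi s' i' x y z t l') l' x y z t).
    change (sig s i l = 0%C). apply (Hlin x y z t sig); auto.
    + intros s' i'. unfold sig, Zvf.
      apply ra_plus; [apply ra_minus; [apply ra_mult; [apply ra_id | apply Hpan] | apply ra_mult; [apply ra_const | apply Hpan]] | apply ra_mult; [apply ra_const | apply Hpan]].
    + intros i' r. unfold sig, Zvf. rewrite !(jump_pd Rsp dR phi HR Hsol Hpreg).
      unfold Jac, one_if_eq. destruct i'; ring.
    + intros s' i'. destruct i'.
      * eapply lim_ext. 2: { eapply lim_eqL'.
          { apply lim_plus. apply lim_minus.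
            apply lim_minus. apply (Hpas s' I1 Dz x y z t). apply (lim_const _ (pd Dz (pd Dx u) x y z t)).
            apply (lim_scal _ (pd Dz (pd Dy u) x y z t)). eapply lim_div0. apply (Hpas s' I1 Dx x y z t).
            apply (lim_scal _ (pd Dz (pd Dx u) x y z t)). eapply lim_div0. apply (Hpas s' I1 Dy x y z t). }
          unfold ulead; ring. }
        intros l' Hl'. unfold sig, Zvf. rewrite !(pd_decomp phi s' I1) by (apply Hpreg; exact Hl').
        simpl. ring.
      * eapply lim_ext. 2: { eapply lim_eqL'.
          { apply lim_plus. apply lim_minus.
            apply lim_minus. apply (Hpas s' I2 Dz x y z t). apply (lim_const _ (pd Dz (pd Dy u) x y z t)).
            apply (lim_scal _ (pd Dz (pd Dy u) x y z t)). eapply lim_div0. apply (Hpas s' I2 Dx x y z t).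
            apply (lim_scal _ (pd Dz (pd Dx u) x y z t)). eapply lim_div0. apply (Hpas s' I2 Dy x y z t). }
          unfold ulead; ring. }
        intros l' Hl'. unfold sig, Zvf. rewrite !(pd_decomp phi s' I2) by (apply Hpreg; exact Hl').
        simpl. ring.
Qed.
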